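(* Let $A$ be a commutative ring and let $(a,b)$ be a unimodular row. The following are equivalent: (1) There exist $a_0,\ldots,a_n\in A$ such that $[a,b]=\infty\cdot S(a_n)S(a_{n-1})\cdots S(a_0)$. (2) There exist $a_0,\ldots,a_n,r_0,\ldots,r_{n-1}\in A$ such that, setting $r_{-2}:=a$, $r_{-1}:=b$, $r_n:=0$, one has $r_{k-2}=a_kr_{k-1}+r_k$ for $0\le k\le n$.
   Context: A unimodular row over $A$ is $(a,b)\in A^2$ with $aA+bA=A$; $[a,b]$ denotes its class modulo multiplication by units of $A$. $\mathrm{GL}_2(A)$ acts on these classes on the right by $[u]\cdot M=[uM]$; $\infty=[1,0]$. $S(a)=\begin{pmatrix}a&1\\1&0\end{pmatrix}$. *)

(* Defs.v *)
From HB Require Import structures.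
From mathcomp Require Import all_boot all_order all_algebra.
Set Implicit Arguments. Unset Strict Implicit. Unset Printing Implicit Defensive.
Import GRing.Theory.
Local Open Scope ring_scope.

(* A commutative ring (possibly the zero ring): comPzRingType. *)

Definition is_unit (A : comPzRingType) (u : A) : Prop := exists v : A, u * v = 1.

Definition unimodular (A : comPzRingType) (a b : A) : Prop :=
  exists x y : A, a * x + b * y = 1.

Definition row2 (A : comPzRingType) (a b : A) : 'rV[A]_2 :=
  \row_(j < 2) (if j == 0 :> nat then a else b).

Definition same_class (A : comPzRingType) (u v : 'rV[A]_2) : Prop :=
  exists lam : A, is_unit lam /\ u = lam *: v.

(* S(c) = [[c,1],[1,0]] *)
Definition Smx (A : comPzRingType) (c : A) : 'M[A]_2 :=
  \matrix_(i < 2, j < 2)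
    (if (i == 0 :> nat) && (j == 0 :> nat) then c
     else if (i == 1 :> nat) && (j == 1 :> nat) then 0 else 1).

Fixpoint Sprod (A : comPzRingType) (q : nat -> A) (n : nat) : 'M[A]_2 :=
  match n with
  | 0 => Smx (q 0)
  | k.+1 => Smx (q k.+1) *m Sprod q k
  end.

Definition inf_row (A : comPzRingType) : 'rV[A]_2 := row2 1 0.

(* Remainder sequence shifted by 2: remseq a b r n j = r_{j-2}, where
   r_{-2} = a, r_{-1} = b, r_n = 0, and r_k = r k for 0 <= k <= n-1. *)
Definition remseq (A : comPzRingType) (a b : A) (r : nat -> A) (n j : nat) : A :=
  if j == 0 then a
  else if j == 1 then b
  else if j == n.+2 then 0
  else r (j - 2)%N.

(* Main.v *)
Require Import Defs.
From mathcomp Require Import all_boot all_order all_algebra.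
Local Open Scope ring_scope.
Import GRing.Theory.

Section Aux.
Variable A : comPzRingType.

Lemma row2E (M : 'rV[A]_2) : M = row2 (M 0 0) (M 0 1).
Proof.
apply/rowP => j; rewrite !mxE; case: j => [[|[|]]] //= H.
- by congr (M _ _); apply/val_inj.
- by congr (M _ _); apply/val_inj.
Qed.

Lemma row2_inj (a b c d : A) : row2 a b = row2 c d -> a = c /\ b = d.
Proof.
move=> H; have := congr1 (fun M : 'rV[A]_2 => M 0 0) H.
have := congr1 (fun M : 'rV[A]_2 => M 0 1) H.
by rewrite /= !mxE /=.
Qed.

Lemma row2_Smx (x y c : A) : row2 x y *m Smx c = row2 (x * c + y) x.
Proof.
apply/rowP => j; rewrite !mxE !big_ord_recl big_ord0 !mxE /=.
by case: j => [[|[|]]] //= _; rewrite ?mulr1 ?mulr0 ?addr0.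
Qed.

Lemma scale_row2 (c x y : A) : c *: row2 x y = row2 (c * x) (c * y).
Proof.
by apply/rowP => j; rewrite !mxE; case: ifP.
Qed.

Lemma SprodS (q : nat -> A) n :
  Sprod q n.+1 = Sprod (fun i => q i.+1) n *m Smx (q 0%N).
Proof.
elim: n => [|n IH] //.
by rewrite -[Sprod q n.+2]/(Smx (q n.+2) *m Sprod q n.+1) IH mulmxA.
Qed.

Lemma fwd n : forall (q s : nat -> A),
  (forall k, (k <= n)%N -> s k = q k * s k.+1 + s k.+2) -> s n.+2 = 0 ->
  row2 (s 0%N) (s 1%N) = s n.+1 *: (inf_row A *m Sprod q n).
Proof.
elim: n => [|n IH] q s Hr Hz.
- rewrite /= /inf_row row2_Smx scale_row2 (Hr 0%N) // Hz.
  by rewrite mul1r addr0 mulr1 mulrC addr0.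
- rewrite SprodS mulmxA scalemxAl.
  rewrite -(IH (fun i => q i.+1) (fun i => s i.+1)) //.
  + by rewrite row2_Smx (Hr 0%N) // mulrC.
  + by move=> k Hk; apply: Hr.
Qed.

Lemma bwd n : forall (q : nat -> A) (a b lam : A),
  row2 a b = lam *: (inf_row A *m Sprod q n) ->
  exists s : nat -> A, [/\ s 0%N = a, s 1%N = b, s n.+2 = 0 &
     forall k, (k <= n)%N -> s k = q k * s k.+1 + s k.+2].
Proof.
elim: n => [|n IH] q a b lam H.
- move: H; rewrite /= /inf_row row2_Smx scale_row2 => /row2_inj [-> ->].
  exists (fun j => if j is 0%N then lam * (1 * q 0%N + 0) else if j is 1%N then lam * 1 else 0).
  split => //; case => // _; by rewrite mul1r addr0 mulr1 mulrC addr0.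
- move: H; rewrite SprodS mulmxA scalemxAl.
  set M := lam *: _.
  rewrite (row2E M) row2_Smx => /row2_inj [Ha Hb].
  have [s' [H0 H1 Hz Hr]] := IH (fun i => q i.+1) (M 0 0) (M 0 1) lam (esym (row2E M)).
  exists (fun j => if j is j'.+1 then s' j' else a).
  split => //; first by rewrite H0.
  case => [|k] Hk.
  + by rewrite Ha H0 H1 mulrC.
  + by apply: Hr.
Qed.

End Aux.

Theorem lemma3p6 (A : comPzRingType) (a b : A) (hab : unimodular a b) :
  (exists (n : nat) (q : nat -> A),
      same_class (row2 a b) (inf_row A *m Sprod q n))
  <->
  (exists (n : nat) (q : nat -> A) (r : nat -> A),
      forall k : nat, (k <= n)%N ->
        remseq a b r n k = q k * remseq a b r n k.+1 + remseq a b r n k.+2).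
Proof.
split.
- move=> [n [q [lam [_ H]]]].
  have [s [H0 H1 Hz Hr]] := @bwd _ _ _ _ _ _ H.
  exists n, q, (fun i => s i.+2).
  have E : forall j, remseq a b (fun i => s i.+2) n j = s j.
    move=> j; rewrite /remseq.
    case: j => [|[|j]] //=.
    case: eqP => [[->]|_] //.
    by rewrite subn2.
  by move=> k Hk; rewrite !E; apply: Hr.
- move=> [n [q [r Hr]]].
  have := @fwd _ _ _ _ Hr.
  rewrite /remseq /= eqxx => /(_ erefl).
  set lam := (if n.+1 == 1 then _ else _).
  move=> H; exists n, q, lam; split => //.
  case: hab => x [y Hxy].
  move: H; move: (inf_row A *m Sprod q n) => w.
  rewrite [w]row2E scale_row2 => /row2_inj [Ea Eb].
  exists (w 0 0 * x + w 0 1 * y).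
  by rewrite -Hxy Ea Eb mulrDr !mulrA.
Qed.
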